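(* Let $R$ be a commutative ring, $F$ a free $R$-module with basis $e_1,\dots,e_n$, $\varphi:F\to R$ an $R$-linear map, $M$ an $R$-module and $t\ge 0$. Define $\gamma_t:K_{s+t}(\varphi,M)\to K_s(\varphi,K_t(\varphi,M))=\bigwedge^sF\otimes_R K_t(\varphi,M)$ for every $s\ge 0$ by $\gamma_t(f)=\sum_{\#I=s}e_I\otimes b_I$, where $b_I$ is determined by the decomposition $f=a_I+e_I.b_I$. Then $\gamma_t$ is a map of complexes $K(\varphi,M)\to K(\varphi,K_t(\varphi,M))[-t]$, i.e. $\gamma_t$ commutes with the Koszul differentials (the differential on $K(\varphi,K_t(\varphi,M))$ being the Koszul differential of $\varphi$ with coefficients in the module $K_t(\varphi,M)$).
   Context: The Koszul complex is $K(\varphi,N)=\bigwedge^\bullet F\otimes_R N$ for an $R$-module $N$, with $K_t(\varphi,N)=\bigwedge^tF\otimes_R N$ and differential $e_{i_1}\wedge\cdots\wedge e_{i_s}\otimes m\mapsto \sum_{j=1}^s(-1)^{j+1}e_{i_1}\wedge\cdots\widehat{e_{i_j}}\cdots\wedge e_{i_s}\otimes \varphi(e_{i_j})m$. The exterior algebra acts on $K(\varphi,M)$ by left multiplication, written $a.f$. For $I=\{i_1<\dots<i_s\}$, $e_I=e_{i_1}\wedge\cdots\wedge e_{i_s}$. Every $f\in K_r(\varphi,M)$ is uniquely $\sum_{\#J=r}e_J\otimes m_J$; $e_J$ appears in $f$ if $m_J\ne0$. For $f\in K_{s+t}(\varphi,M)$ and $\#I=s$ there is a unique decomposition $f=a_I+e_I.b_I$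 with $a_I\in K_{s+t}(\varphi,M)$, $b_I\in K_t(\varphi,M)$, no $e_J$ with $J\supseteq I$ appearing in $a_I$, and no $e_S$ with $S\cap I\ne\emptyset$ appearing in $b_I$. *)

(* Defs.v *)
(* Concrete model of the Koszul complex K(phi,N) = /\F (x) N
   for F free with basis e_0,...,e_{n-1} (indices 'I_n) and phi : F -> R
   determined by x i := phi(e_i).  An element sum_J e_J (x) m_J is represented
   by its coefficient function J |-> m_J, i.e. by f : {ffun {set 'I_n} -> N};
   it lies in K_r(phi,N) iff m_J = 0 whenever #|J| <> r. *)
From HB Require Import structures.
From mathcomp Require Import all_boot all_order all_algebra.
Set Implicit Arguments. Unset Strict Implicit. Unset Printing Implicit Defensive.
Import Order.TTheory GRing.Theory Num.Theory.
Local Open Scope ring_scope.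

(* number of pairs (i,s) in I x S with i > s:
   e_I /\ e_S = (-1)^(inv_count I S) e_(I u S) when I, S are disjoint. *)
Definition inv_count (n : nat) (I S : {set 'I_n}) : nat :=
  #|[set p : 'I_n * 'I_n | [&& p.1 \in I, p.2 \in S & (p.2 < p.1)%N]]|.


Definition homogeneous (R : comPzRingType) (N : lmodType R) (n r : nat)
  (f : {ffun {set 'I_n} -> N}) : Prop :=
  forall J : {set 'I_n}, f J != 0 -> #|J| = r.

(* Koszul differential:
   d(e_J (x) m) = sum_k (-1)^(k+1) e_(J \ j_k) (x) phi(e_(j_k)) m,
   in coefficients: (d f)_L = sum_(j notin L) (-1)^#{i in L | i < j} x_j f_(j u L). *)
Definition koszul_d (R : comPzRingType) (N : lmodType R) (n : nat)
  (x : 'I_n -> R) (f : {ffun {set 'I_n} -> N}) : {ffun {set 'I_n} -> N} :=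
  [ffun L : {set 'I_n} =>
     \sum_(j : 'I_n | j \notin L)
        ((-1) ^+ inv_count [set j] L * x j) *: f (j |: L)].

(* Left multiplication by e_I:  (e_I . b)_J = sum over S disjoint from I with
   I u S = J of (-1)^(inv_count I S) b_S. *)
Definition ext_mul (R : comPzRingType) (N : lmodType R) (n : nat)
  (I : {set 'I_n}) (b : {ffun {set 'I_n} -> N}) : {ffun {set 'I_n} -> N} :=
  [ffun J : {set 'I_n} =>
     \sum_(S : {set 'I_n} | [disjoint I & S] && (I :|: S == J))
        (-1) ^+ inv_count I S *: b S].

(* b_I in the unique decomposition f = a_I + e_I . b_I (f in K_(s+t), #I = s):
   b_I has coefficient (-1)^(inv_count I S) f_(I u S) at each S of size t
   disjoint from I, and 0 elsewhere. *)
Definition bI (R : comPzRingType) (M : lmodType R) (n t : nat)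
  (I : {set 'I_n}) (f : {ffun {set 'I_n} -> M}) : {ffun {set 'I_n} -> M} :=
  [ffun S : {set 'I_n} =>
     if (#|S| == t) && [disjoint I & S]
     then (-1) ^+ inv_count I S *: f (I :|: S) else 0].

Definition gamma (R : comPzRingType) (M : lmodType R) (n s t : nat)
  (f : {ffun {set 'I_n} -> M})
  : {ffun {set 'I_n} -> {ffun {set 'I_n} -> M}} :=
  [ffun I : {set 'I_n} => if #|I| == s then bI t I f else 0].

(* Main.v *)
Require Import Defs.
From HB Require Import structures.
From mathcomp Require Import all_boot all_order all_algebra.
Import GRing.Theory.
Local Open Scope ring_scope.

Lemma inv_count_Ul n (A B S : {set 'I_n}) : [disjoint A & B] ->
  inv_count (A :|: B) S = (inv_count A S + inv_count B S)%N.
Proof.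
move=> dAB; rewrite /inv_count.
set X := [set p : 'I_n * 'I_n | [&& p.1 \in A, p.2 \in S & (p.2 < p.1)%N]].
set Y := [set p : 'I_n * 'I_n | [&& p.1 \in B, p.2 \in S & (p.2 < p.1)%N]].
have -> : [set p : 'I_n * 'I_n | [&& p.1 \in A :|: B, p.2 \in S & (p.2 < p.1)%N]] = X :|: Y.
  by apply/setP => p; rewrite /X /Y !inE andb_orl.
rewrite cardsU.
have -> : X :&: Y = set0.
  apply/setP => p; rewrite /X /Y !inE; case hA: (p.1 \in A); case hB: (p.1 \in B); rewrite /= ?andbF //.
  by move: (disjoint_setI0 dAB) => /setP /(_ p.1); rewrite !inE hA hB.
by rewrite cards0 subn0.
Qed.

Lemma inv_count_Ur n (A B S : {set 'I_n}) : [disjoint A & B] ->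
  inv_count S (A :|: B) = (inv_count S A + inv_count S B)%N.
Proof.
move=> dAB; rewrite /inv_count.
set X := [set p : 'I_n * 'I_n | [&& p.1 \in S, p.2 \in A & (p.2 < p.1)%N]].
set Y := [set p : 'I_n * 'I_n | [&& p.1 \in S, p.2 \in B & (p.2 < p.1)%N]].
have -> : [set p : 'I_n * 'I_n | [&& p.1 \in S, p.2 \in A :|: B & (p.2 < p.1)%N]] = X :|: Y.
  by apply/setP => p; rewrite /X /Y !inE andb_orl andb_orr.
rewrite cardsU.
have -> : X :&: Y = set0.
  apply/setP => p; rewrite /X /Y !inE; case hA: (p.2 \in A); case hB: (p.2 \in B); rewrite /= ?andbF //.
  by move: (disjoint_setI0 dAB) => /setP /(_ p.2); rewrite !inE hA hB.
by rewrite cards0 subn0.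
Qed.

Lemma ffunZE (R : comPzRingType) (M : lmodType R) (T:finType) a (g : {ffun T -> M}) z :
  (a *: g) z = a *: g z.
Proof. by rewrite ffunE. Qed.

Lemma ifffunE (R : comPzRingType) (M : lmodType R) (T:finType) b (g : {ffun T -> M}) z :
  (if b then g else 0) z = if b then g z else 0.
Proof. by case: b; rewrite ?ffunE. Qed.

Lemma disjU1 (T : finType) (j : T) (L S : {set T}) :
  [disjoint j |: L & S] = (j \notin S) && [disjoint L & S].
Proof.
by rewrite -!setI_eq0 setIUl setU_eq0 -disjoints1 -setI_eq0.
Qed.

Theorem lemma2p3 (R : comPzRingType) (M : lmodType R) (n : nat)
  (x : 'I_n -> R) (t s : nat) (f : {ffun {set 'I_n} -> M}) :
  homogeneous (s + t) f ->
  koszul_d x (gamma s t f) = gamma s.-1 t (koszul_d x f).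
Proof.
move=> hf; apply/ffunP => L; apply/ffunP => S.
rewrite /koszul_d /gamma /bI !ffunE sum_ffunE.
under eq_bigr => j hj do rewrite ffunZE !ffunE cardsU1 hj ifffunE ffunE.
have f0 : forall J : {set 'I_n}, #|J| != (s + t)%N -> f J = 0.
  by move=> J hJ; apply/eqP; apply: contraNT hJ => /hf ->.
case hL: (#|L| == s.-1); last first.
  rewrite ffunE big1 // => j _; case: ifP => hs; last by rewrite scaler0.
  by move: hL; rewrite -(eqP hs) /= eqxx.
rewrite ffunE.
case hS: (#|S| == t); last first.
  by rewrite big1 // => j _; case: ifP => _; rewrite /= ?scaler0.
case dLS: [disjoint L & S]; last first.
  rewrite big1 // => j _; case: ifP => _ //=; last by rewrite scaler0.
  by rewrite disjU1 dLS andbF /= ?scaler0.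
rewrite /= ffunE scaler_sumr.
case: s hf f0 hL => [|s'] hf f0 hL.
  rewrite big1; last by move=> j _; rewrite add1n /= scaler0.
  rewrite big1 // => j hj; rewrite f0 ?scaler0 //.
  rewrite cardsU1 hj cardsU (disjoint_setI0 dLS) cards0 subn0 (eqP hL) (eqP hS).
  by rewrite /= !add0n add1n (gtn_eqF (ltnSn t)).
rewrite add1n eqSS hL.
rewrite [LHS]big_mkcond [RHS]big_mkcond; apply: eq_bigr => j _.
case jL: (j \in L); first by rewrite inE jL.
case jS: (j \in S); first by rewrite inE jL jS /= disjU1 jS /= scaler0.
rewrite inE jL jS disjU1 jS dLS /= setUA !scalerA; congr (_ *: _).
rewrite inv_count_Ul ?disjoints1 ?jL // inv_count_Ur // !exprD.
set a := (-1) ^+ _; set b := (-1) ^+ _; set c := (-1) ^+ _.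
rewrite [RHS]mulrC -!mulrA; congr (_ * _); exact: mulrCA.
Qed.
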